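(* In the category of groups, with $0$ the trivial group, a finite group $H$ is nilpotent iff the diagonal homomorphism $H\to H\times H$, $h\mapsto(h,h)$, lies in $\{0\to G:\ G\text{ an arbitrary group}\}^{lr}$.
   Context: For morphisms $f:A\to B$ and $g:X\to Y$ in a category, write $f\rightthreetimes g$ (''$f$ has the left lifting property with respect to $g$'') if for all morphisms $i:A\to X$, $j:B\to Y$ with $g\circ i=j\circ f$ there exists a morphism $h:B\to X$ with $h\circ f=i$ and $g\circ h=j$. For a class $C$ of morphisms, $C^l=\{f:\ f\rightthreetimes g\text{ for all }g\in C\}$ and $C^r=\{g:\ f\rightthreetimes g\text{ for all }f\in C\}$; $C^{lr}=(C^l)^r$. *)

(* Defs.v *)
From HB Require Import structures.
From mathcomp Require Import all_boot all_fingroup all_solvable.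
Set Implicit Arguments. Unset Strict Implicit. Unset Printing Implicit Defensive.

Record Grp := MkGrp {
  carrier :> Type;
  gmul : carrier -> carrier -> carrier;
  gone : carrier;
  ginv : carrier -> carrier;
  gmulA : forall x y z, gmul x (gmul y z) = gmul (gmul x y) z;
  gmul1 : forall x, gmul gone x = x;
  gmulV : forall x, gmul (ginv x) x = gone
}.

Definition is_hom (A B : Grp) (f : A -> B) : Prop :=
  forall x y, f (gmul x y) = gmul (f x) (f y).

Definition mclass := forall A B : Grp, (A -> B) -> Prop.

(* f ⧄ g : f has the left lifting property w.r.t. g (equality of morphisms
   is equality of underlying functions, stated pointwise). *)
Definition llp (A B X Y : Grp) (f : A -> B) (g : X -> Y) : Prop :=
  forall (i : A -> X) (j : B -> Y), is_hom i -> is_hom j ->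
    (forall a, g (i a) = j (f a)) ->
    exists h : B -> X, is_hom h /\ (forall a, h (f a) = i a) /\ (forall b, g (h b) = j b).

Definition lorth (C : mclass) : mclass :=
  fun A B f => is_hom f /\ forall (X Y : Grp) (g : X -> Y), C X Y g -> llp f g.

Definition rorth (C : mclass) : mclass :=
  fun X Y g => is_hom g /\ forall (A B : Grp) (f : A -> B), C A B f -> llp f g.

Definition unitGrp : Grp :=
  @MkGrp unit (fun _ _ => tt) tt (fun _ => tt)
    (fun _ _ _ => erefl) (fun x => match x with tt => erefl end) (fun _ => erefl).

Inductive C0 : mclass :=
  | C0_intro (G : Grp) : C0 (fun _ : unitGrp => gone G).

Definition prodGrp (A B : Grp) : Grp.
Proof.
refine (@MkGrp (A * B)%type
  (fun x y => (gmul x.1 y.1, gmul x.2 y.2)) (gone A, gone B)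
  (fun x => (ginv x.1, ginv x.2)) _ _ _).
- by move=> [? ?] [? ?] [? ?] /=; rewrite !gmulA.
- by move=> [? ?] /=; rewrite !gmul1.
- by move=> [? ?] /=; rewrite !gmulV.
Defined.

Definition grp_of_fin (gT : finGroupType) : Grp :=
  @MkGrp gT (@mulg gT) 1%g (@invg gT) (@mulgA gT) (@mul1g gT) (@mulVg gT).

Definition diag (G : Grp) : G -> prodGrp G G := fun h => (h, h).

(* Main.v *)
Require Import Defs.
From mathcomp Require Import all_boot all_fingroup all_solvable.
From Stdlib Require Import ClassicalEpsilon.
Set Implicit Arguments. Unset Strict Implicit. Unset Printing Implicit Defensive.

Definition cb (P : Prop) : bool := if excluded_middle_informative P then true else false.
Lemma cbP (P : Prop) : cb P <-> P.
Proof. by rewrite /cb; case: excluded_middle_informative. Qed.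

Section GrpLemmas.
Variable G : Grp.
Lemma gmulVr (x : G) : gmul x (ginv x) = gone G.
Proof.
rewrite -[gmul x _]gmul1 -(gmulV (ginv x)) -gmulA [gmul (ginv x) (gmul x _)]gmulA.
by rewrite gmulV gmul1 gmulV.
Qed.
Lemma gmulr1 (x : G) : gmul x (gone G) = x.
Proof. by rewrite -(gmulV x) gmulA gmulVr gmul1. Qed.
Lemma gcancel (x y z : G) : gmul x y = gmul x z -> y = z.
Proof. by move=> e; rewrite -(gmul1 y) -(gmulV x) -gmulA e gmulA gmulV gmul1. Qed.
End GrpLemmas.

Lemma hom1 (A B : Grp) (f : A -> B) : is_hom f -> f (gone A) = gone B.
Proof.
move=> hf; apply: (@gcancel _ (f (gone A))).
by rewrite -hf gmul1 gmulr1.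
Qed.

Section Fwd.
Local Open Scope group_scope.
Variable gT : finGroupType.

Lemma nilX : nilpotent [set: gT] -> nilpotent [set: gT * gT].
Proof.
move=> nilT.
have -> : [set: gT * gT] = setX [set: gT] [set: gT].
  by apply/setP => x; rewrite !inE.
rewrite (dprod_nil (setX_dprod [set: gT]%G [set: gT]%G)).
by rewrite -(isog_nil (isog_setX1 _ [set: gT]%G)) -(isog_nil (isog_set1X _ [set: gT]%G)) nilT.
Qed.

Lemma key (A B : Grp) (f : A -> B) (hf : lorth C0 f)
  (j : B -> prodGrp (grp_of_fin gT) (grp_of_fin gT)) (hj : is_hom j)
  (hjf : forall a, (j (f a)).1 = (j (f a)).2) (nilT : nilpotent [set: gT]) :
  forall b, (j b).1 = (j b).2.
Proof.
move=> b; apply/eqP.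
pose X := [set x : gT * gT | cb (exists b, x = j b)].
pose D := <<X>>%G.
pose Dl := [set x : gT * gT | x.1 == x.2].
have gDl : group_set Dl.
  apply/group_setP; split; first by rewrite inE.
  by move=> x y; rewrite !inE => /eqP e1 /eqP e2 /=; rewrite e1 e2.
pose DL := Group gDl.
have JX : forall b, j b \in D by move=> b'; apply: mem_gen; rewrite inE; apply/cbP; exists b'.
suff : D \subset DL by move/subsetP/(_ _ (JX b)); rewrite inE.
apply/negPn/negP => nDL.
have prM0 : (D :&: DL)%G \in [pred G : {group (gT*gT)} | G \proper D].
  by rewrite inE /= properE subsetIl /= subsetI subxx.
have [M maxM sM0M] := maxgroup_exists prM0.
case/maxgroupP: maxM => /= prMD maxM.
have nilD : nilpotent D := nilpotentS (subsetT _) (nilX nilT).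
have prMN := nilpotent_proper_norm nilD prMD.
have nMD : D \subset 'N(M).
  have sND : 'N_D(M) \subset D := subsetIl _ _.
  case: (boolP ('N_D(M) \proper D)) => [pr | npr].
    have := maxM ('N_D(M))%G pr (proper_sub prMN) => eq.
    by rewrite /= eq properxx in prMN.
  have eqND : 'N_D(M) = D by apply/eqP; rewrite eqEproper sND.
  by rewrite -eqND subsetIr.
pose phi : B -> grp_of_fin (coset_of M) := fun b => coset M (j b).
have hphi : is_hom phi.
  move=> x y; rewrite /phi hj.
  exact: (morphM (coset_morphism M) (subsetP nMD _ (JX x)) (subsetP nMD _ (JX y))).
have := (proj2 hf) unitGrp (grp_of_fin (coset_of M)) _ (C0_intro _) (fun _ => tt) phi _ hphi _.
case.
- by move=> ? ?.
- move=> a; rewrite /phi coset_id //; apply: (subsetP sM0M).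
  by rewrite inE JX inE /= hjf.
move=> h [_ [_ hh]].
have sXM : X \subset M.
  apply/subsetP => x; rewrite inE => /cbP [b' ->].
  apply: coset_idr; first exact: (subsetP nMD _ (JX b')).
  exact: (esym (hh b')).
move: prMD; rewrite properE => /andP [_].
by rewrite gen_subG sXM.
Qed.
End Fwd.

Section Bwd.
Local Open Scope group_scope.
Variable gT : finGroupType.
Variable M : {group gT}.
Hypothesis nM : [set: gT] \subset 'N(M).
Hypothesis sMR : M \subset [~: M, [set: gT]].

Lemma idM (a b c d : gT) : (a * b)^-1 * (c * d) = (a^-1 * c)^b * (b^-1 * d).
Proof. by rewrite conjgE invMg !mulgA mulgK. Qed.
Lemma idV (a c : gT) : (a^-1)^-1 * c^-1 = ((a^-1 * c)^-1)^(a^-1).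
Proof. by rewrite conjgE invgK invMg invgK !mulgA mulgK. Qed.

Definition Bc := {p : gT * gT | p.1^-1 * p.2 \in M}.
Lemma inN x : x \in 'N(M). Proof. exact: (subsetP nM _ (in_setT x)). Qed.

Definition Bmul (p q : Bc) : Bc.
refine (exist _ (val p * val q) _).
rewrite /= idM groupM // ?memJ_norm ?inN //; [exact: (valP p) | exact: (valP q)].
Defined.
Definition Bone : Bc.
refine (exist _ 1 _). by change ((1:gT)^-1 * 1 \in M); rewrite invg1 mulg1 group1.
Defined.
Definition Binv (p : Bc) : Bc.
refine (exist _ (val p)^-1 _).
by rewrite /= idV memJ_norm ?inN // groupV; exact: (valP p).
Defined.
Definition BG : Grp.
refine (@MkGrp Bc Bmul Bone Binv _ _ _).
- by move=> x y z; apply: val_inj; rewrite /= mulgA.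
- by move=> x; apply: val_inj; rewrite /= mul1g.
- by move=> x; apply: val_inj; rewrite /= mulVg.
Defined.
Lemma pmulE (x y : gT * gT) : (x * y)%g = ((x.1 * y.1)%g, (x.2 * y.2)%g). Proof. by []. Qed.

Definition fB (a : gT) : BG.
refine (exist _ (a, a) _). by rewrite /= mulVg group1.
Defined.
Definition eB (m : gT) : BG := insubd Bone (1, m).
Lemma val_eB m : m \in M -> val (eB m) = (1, m).
Proof. by move=> Mm; rewrite /eB val_insubd /= invg1 mul1g Mm. Qed.

Lemma lorth_fB : lorth C0 (fB : grp_of_fin gT -> BG).
Proof.
split; first by move=> x y; apply: val_inj.
move=> X Y g [] G i j _ hj sq.
have jf : forall a, j (fB a) = gone G by move=> a; rewrite -sq.
have ejm : forall m n, m \in M -> n \in M -> eB (m * n) = gmul (eB m) (eB n).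
  move=> m n Mm Mn; apply: val_inj; rewrite /= !val_eB ?groupM //.
  by rewrite pmulE /= mulg1.
have comm : forall a x, a \in M -> j (eB [~ a, x]) = gone G.
  move=> a x Ma.
  have -> : eB [~ a, x] = gmul (eB a^-1) (gmul (gmul (fB x^-1) (eB a)) (fB x)).
    apply: val_inj; rewrite /= !val_eB ?groupV //; last first.
      by rewrite commgEl groupM ?groupV // memJ_norm ?inN.
    by rewrite !pmulE /= mulg1 mulVg mulg1 commgEl !mulgA.
  rewrite !hj !jf gmul1 gmulr1 -hj -ejm ?groupV // mulVg.
  have -> : eB 1 = fB 1 by apply: val_inj; rewrite val_eB.
  exact: jf.
have prod : forall n (c : 'I_n -> gT), (forall i, c i \in commg_set M [set: gT]) ->
    (\prod_(i < n) c i \in M) /\ j (eB (\prod_(i < n) c i)) = gone G.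
  elim=> [|n IH] c Hc.
    rewrite big_ord0 group1; split => //.
    have -> : eB 1 = fB 1 by apply: val_inj; rewrite val_eB.
    exact: jf.
  rewrite big_ord_recr /=.
  have [IH1 IH2] := IH (fun i => c (widen_ord (leqnSn n) i)) (fun i => Hc _).
  have := Hc ord_max; case/imset2P => a x Ma _ ->.
  have Mc : [~ a, x] \in M by rewrite commgEl groupM ?groupV // memJ_norm ?inN.
  by rewrite groupM // ejm // hj IH2 comm // gmul1.
exists (fun _ => tt); split; first by [].
split; first by move=> a; case: (i a).
move=> b.
have eM : forall m, m \in M -> j (eB m) = gone G.
  move=> m /(subsetP sMR) /gen_prodgP [n [c Hc ->]].
  exact: (proj2 (prod n c Hc)).
have -> : b = gmul (fB (val b).1) (eB ((val b).1^-1 * (val b).2)).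
  apply: val_inj; rewrite /= val_eB; last exact: (valP b).
  by rewrite pmulE /= mulg1 mulKVg; case: (val b).
by rewrite hj jf eM ?gmul1 //; exact: (valP b).
Qed.
Lemma bwd (H : rorth (lorth C0) (@diag (grp_of_fin gT))) : M :=: 1.
Proof.
apply/eqP; rewrite eqEsubset sub1G andbT; apply/subsetP => m Mm.
have := (proj2 H) _ _ _ lorth_fB id (fun p : BG => val p) (fun _ _ => erefl) (fun _ _ => erefl)
  (fun _ => erefl).
case=> h [_ [_ hh]].
have := hh (eB m); rewrite val_eB // /diag => [[e1 e2]].
by rewrite inE -e2 e1.
Qed.
End Bwd.

Local Open Scope group_scope.
Theorem claim1 (gT : finGroupType) :
  nilpotent [set: gT] <->
  rorth (lorth C0) (@diag (grp_of_fin gT)).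
Proof.
split.
- move=> nilT; split; first by move=> x y.
  move=> A B f hf i j hi hj sq.
  have hjf : forall a, (j (f a)).1 = (j (f a)).2 by move=> a; rewrite -sq.
  have e := key hf hj hjf nilT.
  exists (fun b => (j b).1); split; first by move=> x y; rewrite hj.
  split; first by move=> a; rewrite -sq.
  by move=> b; rewrite /diag {2}e; case: (j b).
- move=> H; apply/negPn/negP => /forall_inPn [N sN ntN].
  have {}sN : N \subset [~: N, [set: gT]] by move: sN; rewrite unfold_in /= subsetI subsetT.
  pose M := [~: N, [set: gT]]%G.
  have nM : [set: gT] \subset 'N(M) by apply: commg_normr.
  have sNM : N \subset M by [].
  have sMR : M \subset [~: M, [set: gT]] by apply: commSg.
  have := bwd nM sMR H => M1.
  by move: ntN; rewrite /= -subG1 -M1 sNM.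
Qed.
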